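(* Fix an MDP $M$ and a layer $h\in[H]$. Suppose we have a sequence of functions $g^{(1)},\dots,g^{(T)}:\mathcal{X}\times\mathcal{A}\to[0,B]$ and policies $\pi^{(1)},\dots,\pi^{(T)}\in\Pi$ such that for all $t\in[T]$, $\sum_{i<t}\mathbb{E}^{M,\pi^{(i)}}[(g^{(t)}(x_h,a_h))^2]\le\beta^2$. Then $$\sum_{t=1}^T\mathbb{E}^{M,\pi^{(t)}}[g^{(t)}(x_h,a_h)]\le 2(C^M_{1;h})^{1/3}(\beta^2B+B^3)^{1/3}T^{2/3}.$$
   Context: Episodic MDP $M$ over countable $\mathcal{X}$, actions $\mathcal{A}$, horizon $H$; $\Pi\subseteq\Pi_{\mathrm{RNS}}$ a policy class; $d^{M,\pi}_h(x,a)$ the layer-$h$ occupancy; $C^M_{1;h}=\inf_{\mu\in\Delta(\mathcal{X}\times\mathcal{A})}\sup_{\pi\in\Pi}\mathbb{E}^{M,\pi}\big[\frac{d^{M,\pi}_h(x_h,a_h)}{\mu(x_h,a_h)}\big]$. *)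

(* Defs.v *)
From HB Require Import structures.
From mathcomp Require Import all_boot all_order all_algebra.
From mathcomp Require Import all_classical all_reals all_analysis.
Set Implicit Arguments. Unset Strict Implicit. Unset Printing Implicit Defensive.
Import Order.TTheory GRing.Theory Num.Theory.
Local Open Scope classical_set_scope.
Local Open Scope ring_scope.

Definition is_dist (R : realType) (T : choiceType) (p : T -> R) : Prop :=
  (forall t, 0 <= p t) /\ (\esum_(t in [set: T]) (p t)%:E = 1)%E.

(* Episodic MDP dynamics (rewards play no role here): initial state law d_1 and
   layer-dependent transitions  m_trans h x a x' = P_h(x' | x, a)
   (transition from layer h to layer h+1, layers numbered from 1). *)
Record mdp (R : realType) (X A : countType) := MDP {
  m_init : X -> R;
  m_trans : nat -> X -> A -> X -> R;
  m_init_dist : is_dist m_init;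
  m_trans_dist : forall h x a, is_dist (m_trans h x a) }.

(* Randomized non-stationary (history dependent) policies:
   pi h tau x a = pi_h(a | tau, x), tau = (x_1,a_1,...,x_{h-1},a_{h-1}). *)
Definition policy (R : realType) (X A : countType) :=
  nat -> seq (X * A) -> X -> A -> R.

Definition is_rns_policy (R : realType) (X A : countType) (pi : policy R X A) : Prop :=
  forall h tau x, is_dist (pi h tau x).

(* Probability that the trajectory starts with the prefix tau.
   k = number of layers already consumed, prev = last (state, action), past = history. *)
Fixpoint traj_prob (R : realType) (X A : countType) (M : mdp R X A) (pi : policy R X A)
  (k : nat) (prev : option (X * A)) (past tau : seq (X * A)) : R :=
  match tau with
  | [::] => 1
  | (x, a) :: tau' =>
      (match prev with
       | None => m_init M x
       | Some (x0, a0) => m_trans M k x0 a0 x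
       end) * pi k.+1 past x a * traj_prob M pi k.+1 (Some (x, a)) (rcons past (x, a)) tau'
  end.

(* Layer-h occupancy  d_h^{M,pi}(x,a) = P^{M,pi}[(x_h,a_h) = (x,a)]  (h >= 1). *)
Definition occ (R : realType) (X A : countType) (M : mdp R X A) (pi : policy R X A)
  (h : nat) (xa : X * A) : \bar R :=
  (\esum_(tau in [set tau | exists tau', tau = rcons tau' xa /\ size tau' = h.-1])
     (traj_prob M pi 0 None [::] tau)%:E)%E.

(* E^{M,pi}[ f(x_h,a_h) ] for f >= 0. *)
Definition expect (R : realType) (X A : countType) (M : mdp R X A) (pi : policy R X A)
  (h : nat) (f : X * A -> R) : \bar R :=
  (\esum_(xa in [set: X * A]) (occ M pi h xa * (f xa)%:E))%E.

(* the ratio d / mu, with d / 0 = +oo (multiplied by d, so 0 * +oo = 0). *)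
Definition ratio_term (R : realType) (d : \bar R) (m : R) : \bar R :=
  if 0 < m then (d * (m^-1)%:E)%E else +oo%E.

(* E^{M,pi}[ d_h^{M,pi}(x_h,a_h) / mu(x_h,a_h) ] *)
Definition cov_obj (R : realType) (X A : countType) (M : mdp R X A) (pi : policy R X A)
  (h : nat) (mu : X * A -> R) : \bar R :=
  (\esum_(xa in [set: X * A]) (occ M pi h xa * ratio_term (occ M pi h xa) (mu xa)))%E.

Definition Ccov (R : realType) (X A : countType) (M : mdp R X A) (Pi : set (policy R X A))
  (h : nat) : \bar R :=
  ereal_inf [set ereal_sup [set cov_obj M pi h mu | pi in Pi] | mu in [set mu | is_dist mu]].

(* Main.v *)
Require Import Defs.
From HB Require Import structures.
From mathcomp Require Import all_boot all_order all_algebra.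
From mathcomp Require Import all_classical all_reals all_analysis.
Import Order.TTheory GRing.Theory Num.Theory.
Local Open Scope classical_set_scope.
Local Open Scope ring_scope.
From mathcomp Require Import ring lra.
Section Mass.
Variables (R : realType) (X A : countType) (M : mdp R X A) (pi : policy R X A).
Hypothesis Hpi : is_rns_policy pi.

Definition prevd (k : nat) (prev : option (X * A)) (x : X) : R :=
  match prev with None => m_init M x | Some (x0, a0) => m_trans M k x0 a0 x end.

Lemma prevd_dist k prev : is_dist (prevd k prev).
Proof. by case: prev => [[x0 a0]|] /=; [exact: m_trans_dist | exact: m_init_dist]. Qed.

Lemma traj_prob_ge0 tau : forall k prev past, 0 <= traj_prob M pi k prev past tau.
Proof.
elim: tau => [|[x a] tau IH] k prev past /=; first by [].
apply: mulr_ge0; last exact: IH.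
apply: mulr_ge0; first exact: (proj1 (prevd_dist k prev) x).
exact: (proj1 (Hpi k.+1 past x) a).
Qed.

Lemma esum_le_scale (T : choiceType) (S : set T) (f : T -> \bar R) (c : R) :
  0 <= c -> (forall t, S t -> (0 <= f t)%E) -> (\esum_(t in S) f t <= 1)%E ->
  (\esum_(t in S) (c%:E * f t) <= c%:E)%E.
Proof.
move=> c0 f0 le1; apply: ge_ereal_sup => _ [F [finF FS] <-].
have -> : (\sum_(i \in F) (c%:E * f i) = c%:E * \sum_(i \in F) f i)%E.
  rewrite !fsbig_finite //= big_seq [in RHS]big_seq ge0_sume_distrr // => i.
  by rewrite in_fset_set // inE => /FS; apply: f0.
rewrite -[leRHS]mule1; apply: lee_pmul => //.
  by apply: fsume_ge0 => i /FS; apply: f0.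
apply: le_trans le1; apply: ereal_sup_ubound; exists F => //.
Qed.


Lemma traj_mass n : forall k prev past,
  (\esum_(tau in [set tau : seq (X * A) | size tau = n])
     (traj_prob M pi k prev past tau)%:E <= 1)%E.
Proof.
elim: n => [|n IH] k prev past.
  rewrite (_ : [set tau | size tau = 0%N] = [set [::]]); last first.
    by apply/seteqP; split => [tau /= /size0nil ->| tau /= ->].
  by rewrite esum_set1.
rewrite (reindex_esum ([set: X * A] `*`` (fun=> [set tau : seq (X*A) | size tau = n]))
   _ (fun p => p.1 :: p.2)); last first.
  split.
  - by move=> [xa tau] [_ /= ->].
  - by move=> [xa tau] [xa' tau'] _ _ /= [-> ->].
  - by move=> [|xa tau] //= [sz]; exists (xa, tau).
rewrite -(@esum_esum _ _ _ [set: X*A] (fun=> [set tau : seq (X*A) | size tau = n])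
   (fun xa tau => (traj_prob M pi k prev past (xa :: tau))%:E)); last first.
  by move=> *; rewrite lee_fin traj_prob_ge0.
apply: (@le_trans _ _ (\esum_(xa in [set: X * A])
   (prevd k prev xa.1 * pi k.+1 past xa.1 xa.2)%:E)%E).
  apply: le_esum => -[x a] _ /=.
  have -> : \esum_(j in [set tau : seq (X*A) | size tau = n])
      (traj_prob M pi k prev past ((x,a) :: j))%:E =
    \esum_(j in [set tau : seq (X*A) | size tau = n])
      ((prevd k prev x * pi k.+1 past x a)%:E *
        (traj_prob M pi k.+1 (Some (x,a)) (rcons past (x,a)) j)%:E)%E.
    by apply: eq_esum => j _; rewrite -EFinM.
  apply: esum_le_scale.
  - by apply: mulr_ge0; [exact: (proj1 (prevd_dist k prev) x)|exact: (proj1 (Hpi k.+1 past x) a)].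
  - by move=> *; rewrite lee_fin traj_prob_ge0.
  - exact: IH.
rewrite (_ : [set: X*A] = [set: X] `*`` (fun=> [set: A])); last by apply/seteqP; split.
rewrite -(@esum_esum _ _ _ [set: X] (fun=> [set: A])
   (fun x a => (prevd k prev x * pi k.+1 past x a)%:E)); last first.
  move=> x a _ _; rewrite lee_fin.
  by apply: mulr_ge0; [exact: (proj1 (prevd_dist k prev) x)|exact: (proj1 (Hpi k.+1 past x) a)].
apply: (@le_trans _ _ (\esum_(x in [set: X]) (prevd k prev x)%:E)%E).
  apply: le_esum => x _.
  under eq_esum do rewrite EFinM.
  apply: esum_le_scale.
  - exact: (proj1 (prevd_dist k prev) x).
  - by move=> a _; rewrite lee_fin; exact: (proj1 (Hpi k.+1 past x) a).
  - by rewrite (proj2 (Hpi k.+1 past x)).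
by rewrite (proj2 (prevd_dist k prev)).
Qed.

End Mass.
Section Occ.
Variables (R : realType) (X A : countType) (M : mdp R X A) (pi : policy R X A).
Hypothesis Hpi : is_rns_policy pi.

Lemma occ_ge0 h xa : (0 <= occ M pi h xa)%E.
Proof. by apply: esum_ge0 => tau _; rewrite lee_fin traj_prob_ge0. Qed.

Lemma occE h xa : occ M pi h xa =
  \esum_(tau' in [set tau : seq (X * A) | size tau = h.-1])
     (traj_prob M pi 0 None [::] (rcons tau' xa))%:E.
Proof.
rewrite /occ (_ : [set tau | _] = (fun tau' => rcons tau' xa) @`
   [set tau : seq (X * A) | size tau = h.-1]); last first.
  by apply/seteqP; split => [tau /= [tau' [-> sz]]|tau /= [tau' sz <-]];
    [exists tau'|exists tau'].
rewrite esum_image //.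
by move=> s1 s2 _ _ /rcons_inj [].
Qed.

Lemma occ_mass h : (0 < h)%N ->
  (\esum_(xa in [set: X * A]) occ M pi h xa <= 1)%E.
Proof.
move=> h0.
under eq_esum do rewrite occE.
rewrite (@esum_esum _ _ _ [set: X*A] (fun=> [set tau : seq (X * A) | size tau = h.-1])
   (fun xa tau' => (traj_prob M pi 0 None [::] (rcons tau' xa))%:E)); last first.
  by move=> *; rewrite lee_fin traj_prob_ge0.
rewrite -(reindex_esum ([set: X*A] `*`` (fun=> [set tau : seq (X * A) | size tau = h.-1]))
   [set tau : seq (X * A) | size tau = h] (fun p => rcons p.2 p.1)
   (fun tau => (traj_prob M pi 0 None [::] tau)%:E)); last first.
  split.
  - by move=> [xa tau] [_ /= sz]; rewrite /= size_rcons sz prednK.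
  - by move=> [xa tau] [xa' tau'] _ _ /= /rcons_inj [-> ->].
  - move=> tau /=; case/lastP: tau => [|tau' xa]; first by move=> /= h00; rewrite -h00 in h0.
    by rewrite size_rcons => sz; exists (xa, tau') => //; split => //=; rewrite -sz.
exact: traj_mass.
Qed.

End Occ.
Section Core.
Variable R : realType.

Lemma pt (d g D mu B kap eta : R) : 0 <= d -> 0 <= g -> g <= B -> 0 <= D -> 0 <= mu ->
  (mu = 0 -> d = 0) -> 0 < kap -> 0 < eta ->
  d * g <= B * (if D + d <= kap * mu then d else 0) + d ^+ 2 / mu / (2 * eta * kap)
           + eta * ((D + d) * g ^+ 2) / 2.
Proof.
move=> d0 g0 gB D0 mu0 mud k0 e0.
have p2 : 0 < 2 * eta * kap by rewrite !mulr_gt0.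
have t2 : 0 <= d ^+ 2 / mu / (2 * eta * kap).
  by apply: divr_ge0; [apply: divr_ge0 => //; exact: exprn_ge0 | exact: ltW].
have t3 : 0 <= eta * ((D + d) * g ^+ 2) / 2.
  apply: divr_ge0 => //; apply: mulr_ge0; first exact: ltW.
  by apply: mulr_ge0; [exact: addr_ge0 | exact: exprn_ge0].
case: ifPn => hle.
  have : d * g <= B * d by rewrite mulrC ler_wpM2r.
  lra.
rewrite -ltNge in hle.
move: t2 t3 mud d0; case: (eqVneq d 0) => [->|dn0] t2 t3 mud d0.
  rewrite mul0r mulr0; lra.
have dpos : 0 < d by rewrite lt0r dn0 d0.
have mupos : 0 < mu.
  by rewrite lt0r mu0 andbT; apply/eqP => /mud; apply/eqP.
have wpos : 0 < D + d by apply: le_lt_trans hle; rewrite mulr_ge0 // ltW.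
have amgm : d * g <= d ^+ 2 / (2 * eta * (D + d)) + eta * ((D + d) * g ^+ 2) / 2.
  rewrite -subr_ge0.
  have -> : d ^+ 2 / (2 * eta * (D + d)) + eta * ((D + d) * g ^+ 2) / 2 - d * g =
     (d - eta * (D + d) * g) ^+ 2 / (2 * eta * (D + d)).
    by field; rewrite ?(gt_eqF wpos) ?(gt_eqF e0) ?(gt_eqF k0) ?(gt_eqF mupos).
  by apply: divr_ge0; [exact: sqr_ge0 | rewrite ltW // !mulr_gt0].
have cmp : d ^+ 2 / (2 * eta * (D + d)) <= d ^+ 2 / mu / (2 * eta * kap).
  rewrite (_ : d ^+ 2 / mu / (2 * eta * kap) = d ^+ 2 / (2 * eta * (kap * mu))); last first.
    by field; rewrite ?(gt_eqF wpos) ?(gt_eqF e0) ?(gt_eqF k0) ?(gt_eqF mupos).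
  apply: ler_wpM2l; first by rewrite exprn_ge0.
  rewrite lef_pV2 ?posrE ?mulr_gt0 //.
  by apply: ler_wpM2l; [rewrite ltW // mulr_gt0 | exact: ltW].
rewrite mulr0; lra.
Qed.

Lemma prefix (f : nat -> R) c n : (forall i, (i < n)%N -> 0 <= f i) -> 0 <= c ->
  \sum_(t < n) (if \sum_(i < t) f i + f t <= c then f t else 0) <= c.
Proof.
move=> f0 c0.
suff : \sum_(t < n) (if \sum_(i < t) f i + f t <= c then f t else 0) <= \sum_(i < n) f i /\
       \sum_(t < n) (if \sum_(i < t) f i + f t <= c then f t else 0) <= c by case.
elim: n f0 => [|n IH] f0; first by rewrite !big_ord0.
have [IH1 IH2] := IH (fun i hi => f0 i (leqW hi)).
rewrite !big_ord_recr /=.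
case: ifPn => hle.
  split; last by apply: le_trans hle; rewrite lerD2r.
  by rewrite lerD2r.
rewrite addr0; split => //.
by rewrite -[X in X <= _]addr0 lerD // f0.
Qed.

End Core.
Section Core2.
Variable R : realType.

Lemma core_bound (I : Type) (s : seq I) (T : nat) (d g : nat -> I -> R) (mu : I -> R)
  (B beta C : R) : 0 <= B ->
  (forall t x, (t < T)%N -> 0 <= d t x) ->
  (forall t x, (t < T)%N -> 0 <= g t x <= B) ->
  (forall x, 0 <= mu x) ->
  \sum_(x <- s) mu x <= 1 ->
  (forall t, (t < T)%N -> \sum_(x <- s) d t x <= 1) ->
  (forall t x, (t < T)%N -> mu x = 0 -> d t x = 0) ->
  (forall t, (t < T)%N -> \sum_(x <- s) d t x ^+ 2 / mu x <= C) ->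
  (forall t, (t < T)%N -> \sum_(i < t) \sum_(x <- s) d i x * g t x ^+ 2 <= beta ^+ 2) ->
  forall kap eta, 0 < kap -> 0 < eta ->
  \sum_(t < T) \sum_(x <- s) d t x * g t x <=
    B * kap + T%:R * C / (2 * eta * kap) + eta * (T%:R * (beta ^+ 2 + B ^+ 2)) / 2.
Proof.
move=> B0 d0 gB mu0 smu sd mud sC sq kap eta k0 e0.
pose D t x := \sum_(i < t) d i x.
have D0 t x : (t < T)%N -> 0 <= D t x.
  move=> tT; apply: sumr_ge0 => i _; apply: d0; exact: ltn_trans (ltn_ord i) tT.
apply: le_trans (_ : \sum_(t < T) \sum_(x <- s)
   (B * (if D t x + d t x <= kap * mu x then d t x else 0) + d t x ^+ 2 / mu x / (2 * eta * kap)
     + eta * ((D t x + d t x) * g t x ^+ 2) / 2) <= _).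
  apply: ler_sum => t _; apply: ler_sum => x _.
  have tT := ltn_ord t.
  have /andP[g0 gB'] := gB t x tT.
  apply: pt => //; [exact: d0 | exact: D0 | exact: mud].
under eq_bigr do rewrite !big_split /=.
rewrite !big_split /=.
have P1 : \sum_(t < T) \sum_(x <- s) B * (if D t x + d t x <= kap * mu x then d t x else 0)
    <= B * kap.
  rewrite exchange_big /=.
  under eq_bigr do rewrite -mulr_sumr.
  rewrite -mulr_sumr; apply: ler_wpM2l => //.
  apply: le_trans (_ : \sum_(x <- s) kap * mu x <= _); last first.
    by rewrite -mulr_sumr -[leRHS]mulr1 ler_wpM2l // ltW.
  apply: ler_sum => x _; rewrite /D.
  apply: (@prefix R (fun i => d i x)); first by move=> i iT; apply: d0.
  by rewrite mulr_ge0 // ltW.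
have P2 : \sum_(t < T) \sum_(x <- s) d t x ^+ 2 / mu x / (2 * eta * kap)
    <= T%:R * C / (2 * eta * kap).
  rewrite (_ : T%:R * C / _ = \sum_(t < T) (C / (2 * eta * kap))); last first.
    by rewrite sumr_const card_ord -[RHS]mulr_natl mulrA.
  apply: ler_sum => t _; rewrite -mulr_suml; apply: ler_wpM2r.
    by rewrite invr_ge0 ltW // !mulr_gt0.
  exact: sC.
have P3 : \sum_(t < T) \sum_(x <- s) eta * ((D t x + d t x) * g t x ^+ 2) / 2
    <= eta * (T%:R * (beta ^+ 2 + B ^+ 2)) / 2.
  under eq_bigr do rewrite -mulr_suml -mulr_sumr.
  rewrite -mulr_suml -mulr_sumr; apply: ler_wpM2r => //; apply: ler_wpM2l; first exact: ltW.
  rewrite (_ : T%:R * _ = \sum_(t < T) (beta ^+ 2 + B ^+ 2)); last first.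
    by rewrite sumr_const card_ord -[RHS]mulr_natl.
  apply: ler_sum => t _; have tT := ltn_ord t.
  under eq_bigr do rewrite mulrDl.
  rewrite big_split /=; apply: lerD.
    rewrite /D; under eq_bigr do rewrite mulr_suml.
    rewrite exchange_big /=; exact: sq.
  apply: le_trans (_ : \sum_(x <- s) d t x * B ^+ 2 <= _).
    apply: ler_sum => x _; apply: ler_wpM2l; first exact: d0.
    have /andP[g0 gB'] := gB t x tT.
    by apply: lerXn2r; rewrite ?nnegrE.
  by rewrite -mulr_suml -[leRHS]mul1r ler_wpM2r ?sqr_ge0 // sd.
lra.
Qed.

End Core2.
Section Alg.
Variable R : realType.

Lemma cube (L B Tn C K : R) : 0 <= L -> 0 <= C -> 0 <= B -> 0 <= Tn -> 0 <= K ->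
  (0 < L -> 0 < B) -> (0 < L -> 0 < Tn) -> (0 < L -> 0 < K) ->
  (forall kap eta, 0 < kap -> 0 < eta ->
     L <= B * kap + Tn * C / (2 * eta * kap) + eta * (Tn * K) / 2) ->
  L ^+ 3 <= 27 / 4 * Tn ^+ 2 * C * B * K.
Proof.
move=> L0 C0 B0 T0 K0 hB hT hK H.
case: (eqVneq L 0) => [->|Ln0].
  by rewrite expr0n /= !mulr_ge0 // ?exprn_ge0.
have Lp : 0 < L by rewrite lt0r Ln0 L0.
have Bp := hB Lp; have Tp := hT Lp; have Kp := hK Lp.
have := H (L / (3 * B)) (2 * L / (3 * Tn * K)).
rewrite !divr_gt0 ?mulr_gt0 // => /(_ isT isT).
have e1 : B * (L / (3 * B)) = L / 3.
  by field; rewrite (gt_eqF Bp).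
have e3 : 2 * L / (3 * Tn * K) * (Tn * K) / 2 = L / 3.
  by field; rewrite ?(gt_eqF Tp) ?(gt_eqF Kp).
have e2 : Tn * C / (2 * (2 * L / (3 * Tn * K)) * (L / (3 * B))) =
    9 / 4 * (Tn ^+ 2 * C * B * K) / L ^+ 2.
  by field; rewrite ?(gt_eqF Tp) ?(gt_eqF Kp) ?(gt_eqF Bp) ?(gt_eqF Lp).
rewrite e1 e2 e3 => HL.
have HL' : L / 3 <= 9 / 4 * (Tn ^+ 2 * C * B * K) / L ^+ 2 by lra.
have -> : L ^+ 3 = (L / 3) * (3 * L ^+ 2) by field.
have H3 : 0 <= 3 * L ^+ 2 by rewrite mulr_ge0 // exprn_ge0.
have := ler_wpM2r H3 HL' => /= H2.
apply: le_trans H2 _.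
rewrite le_eqVlt; apply/orP; left; apply/eqP.
by field; rewrite ?(gt_eqF Lp).
Qed.

Lemma final (L c B Tn K : R) : 0 <= L -> 0 <= c -> 0 <= B -> 0 <= Tn -> 0 <= K ->
  (forall C', c < C' -> L ^+ 3 <= 27 / 4 * Tn ^+ 2 * C' * B * K) ->
  L <= 2 * c `^ 3^-1 * (B * K) `^ 3^-1 * Tn `^ (2 / 3).
Proof.
move=> L0 c0 B0 T0 K0 H.
set m := 27 / 4 * Tn ^+ 2 * B * K.
have m0 : 0 <= m by rewrite /m !mulr_ge0 // ?exprn_ge0.
have h1 : L ^+ 3 <= 27 / 4 * Tn ^+ 2 * c * B * K.
  apply/ler_addgt0Pr => e e0.
  have dp : 0 < e / (m + 1) by rewrite divr_gt0 // ltr_wpDl.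
  have := H (c + e / (m + 1)); rewrite ltrDl => /(_ dp) HL.
  apply: le_trans HL _.
  have -> : 27 / 4 * Tn ^+ 2 * (c + e / (m + 1)) * B * K =
            27 / 4 * Tn ^+ 2 * c * B * K + m * (e / (m + 1)) by rewrite /m; ring.
  rewrite lerD2l mulrA ler_pdivrMr ?ltr_wpDl //.
  lra.
have h2 : L ^+ 3 <= 8 * Tn ^+ 2 * c * B * K.
  apply: le_trans h1 _.
  have Y0 : 0 <= Tn ^+ 2 * c * B * K by rewrite !mulr_ge0 // exprn_ge0.
  lra.
have cube_pow (x : R) : 0 <= x -> (x `^ 3^-1) ^+ 3 = x.
  by move=> x0; rewrite -powR_mulrn ?powR_ge0 // -powRrM mulVf ?powRr1.
have T23 : (Tn `^ (2 / 3)) ^+ 3 = Tn ^+ 2.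
  rewrite -powR_mulrn ?powR_ge0 // -powRrM -powR_mulrn //; congr (_ `^ _).
  by rewrite divfK.
rewrite -(@ler_pXn2r _ 3) // ?nnegrE //; last first.
  by rewrite !mulr_ge0 // ?powR_ge0.
rewrite !exprMn cube_pow // cube_pow ?mulr_ge0 // T23.
apply: le_trans h2 _; rewrite le_eqVlt; apply/orP; left; apply/eqP.
rewrite (_ : (2 : R) ^+ 3 = 8); last by rewrite !exprS expr0; lra.
ring.
Qed.

End Alg.
Section Main.
Variables (R : realType) (X A : countType) (M : mdp R X A).

Lemma sum_le_esum (T0 : choiceType) (F : set T0) (a : T0 -> \bar R) :
  finite_set F -> (forall x, (0 <= a x)%E) ->
  (\sum_(x <- finmap.enum_fset (fset_set F)) a x <= \esum_(x in [set: T0]) a x)%E.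
Proof.
move=> finF a0; rewrite -fsbig_finite //; apply: ereal_sup_ubound; exists F => //.
Qed.

Lemma ratio_ge0 (d : \bar R) (m : R) : (0 <= d)%E -> (0 <= ratio_term d m)%E.
Proof.
move=> d0; rewrite /ratio_term; case: ifPn => // m0.
by apply: mule_ge0 => //; rewrite lee_fin invr_ge0 ltW.
Qed.

Lemma cov_ge0 (p : policy R X A) h mu : is_rns_policy p -> (0 <= cov_obj M p h mu)%E.
Proof.
move=> Hp.
apply: esum_ge0 => xa _; apply: mule_ge0; first exact: occ_ge0.
by apply: ratio_ge0; exact: occ_ge0.
Qed.

Lemma occ_fin (p : policy R X A) h xa : is_rns_policy p -> (0 < h)%N ->
  occ M p h xa = (fine (occ M p h xa))%:E.
Proof.
move=> Hp h0; rewrite fineK // ge0_fin_numE; last exact: occ_ge0.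
apply: (@le_lt_trans _ _ 1%E); last exact: ltry.
apply: (le_trans _ (@occ_mass _ _ _ M p Hp h h0)).
apply: esum_ge; exists [set xa]; first by split => //; exact: finite_set1.
by rewrite fsbig_set1.
Qed.

Lemma Ccov_ge0 (Pi : set (policy R X A)) h : Pi `<=` @is_rns_policy R X A ->
  (0 <= fine (Ccov M Pi h)).
Proof.
move=> HPi.
case E : (Ccov M Pi h) => [r| |] //=.
rewrite leNgt; apply/negP => r0.
have : (Ccov M Pi h < 0)%E by rewrite E lte_fin.
move=> /ereal_inf_lt [y [mu mud <-]] y0.
have PiE : [set cov_obj M p h mu | p in Pi] = set0.
  apply/seteqP; split => // z [p Pip <-].
  have : (cov_obj M p h mu <= ereal_sup [set cov_obj M p h mu | p in Pi])%E.
    by apply: ereal_sup_ubound; exists p.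
  move=> /le_lt_trans /(_ y0); rewrite ltNge cov_ge0 //; exact: HPi.
have : (Ccov M Pi h <= ereal_sup [set cov_obj M p h mu | p in Pi])%E.
  by apply: ereal_inf_lbound; exists mu.
by rewrite PiE ereal_sup0 E.
Qed.

Lemma near_opt (Pi : set (policy R X A)) h (C' : R) :
  (Ccov M Pi h < +oo)%E -> fine (Ccov M Pi h) < C' ->
  exists mu, is_dist mu /\ forall p, Pi p -> (cov_obj M p h mu <= C'%:E)%E.
Proof.
move=> hC hc.
have : (Ccov M Pi h < C'%:E)%E.
  by move: hC hc; case: (Ccov M Pi h) => [r| |] //= _ _; exact: ltNyr.
move=> /ereal_inf_lt [y [mu mud <-]] y0.
exists mu; split => // p Pip.
apply: le_trans (ltW y0); apply: ereal_sup_ubound; by exists p.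
Qed.

End Main.
Theorem lemmaI8 (R : realType) (X A : countType) (H : nat) (M : mdp R X A)
  (Pi : set (policy R X A)) (HPi : Pi `<=` @is_rns_policy R X A)
  (h : nat) (hh : (1 <= h <= H)%N)
  (T : nat) (B beta : R) (g : nat -> X * A -> R) (pi : nat -> policy R X A)
  (hg : forall t xa, (t < T)%N -> 0 <= g t xa <= B)
  (hpi : forall t, (t < T)%N -> Pi (pi t))
  (hsq : forall t, (t < T)%N ->
     (\sum_(i < t) expect M (pi i) h (fun xa => (g t xa ^+ 2)%R) <= (beta ^+ 2)%:E)%E)
  (hC : (Ccov M Pi h < +oo)%E) :
  (\sum_(t < T) expect M (pi t) h (g t)
     <= (2 * (fine (Ccov M Pi h)) `^ (3^-1) * (beta ^+ 2 * B + B ^+ 3) `^ (3^-1)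
           * (T%:R) `^ (2 / 3))%:E)%E.
Proof.
have h0 : (0 < h)%N by case/andP: hh.
have RHS0 : 0 <= 2 * (fine (Ccov M Pi h)) `^ (3^-1) * (beta ^+ 2 * B + B ^+ 3) `^ (3^-1)
           * (T%:R) `^ (2 / 3).
  by rewrite !mulr_ge0 // powR_ge0.
case: (leP 0 B) => B0; last first.
  rewrite big1 ?lee_fin // => t _.
  rewrite /expect; apply: esum1 => xa _.
  have /andP[g0 gB] := hg t xa (ltn_ord t).
  by have := le_trans g0 gB; rewrite leNgt B0.
have Hp t : (t < T)%N -> is_rns_policy (pi t) by move=> tT; exact: HPi (hpi t tT).
rewrite /expect.
rewrite -(@esum_sum R _ _ [set: X * A] (index_enum 'I_T) xpredT
   (fun xa t => occ M (pi t) h xa * (g t xa)%:E)%E); last first.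
  move=> xa t _ _; apply: mule_ge0; first exact: (@occ_ge0 _ _ _ M (pi t) (Hp t (ltn_ord t))).
  by rewrite lee_fin; case/andP: (hg t xa (ltn_ord t)).
apply: ge_ereal_sup => _ [F [finF _] <-].
rewrite fsbig_finite //=.
set s := finmap.enum_fset (fset_set F).
pose d t xa := fine (occ M (pi t) h xa).
have occE' t xa : (t < T)%N -> occ M (pi t) h xa = (d t xa)%:E.
  by move=> tT; exact: (@occ_fin _ _ _ M (pi t) h xa (Hp t tT) h0).
have d0 t xa : (t < T)%N -> 0 <= d t xa.
  by move=> tT; apply: fine_ge0; exact: (@occ_ge0 _ _ _ M (pi t) (Hp t tT)).
rewrite (_ : (\sum_(xa <- s) \sum_(t < T) (occ M (pi t) h xa * (g t xa)%:E))%E =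
   (\sum_(t < T) \sum_(xa <- s) d t xa * g t xa)%:E); last first.
  rewrite exchange_big /= -sumEFin; apply: eq_bigr => t _; rewrite -sumEFin.
  by apply: eq_bigr => xa _; rewrite occE' // EFinM.
rewrite lee_fin.
rewrite (_ : beta ^+ 2 * B + B ^+ 3 = B * (beta ^+ 2 + B ^+ 2)); last by ring.
have L0 : 0 <= \sum_(t < T) \sum_(xa <- s) d t xa * g t xa.
  apply: sumr_ge0 => t _; apply: sumr_ge0 => xa _; apply: mulr_ge0; first exact: d0.
  by case/andP: (hg t xa (ltn_ord t)).
have c00 := @Ccov_ge0 _ _ _ M Pi h HPi.
apply: final => //.
- by rewrite addr_ge0 // sqr_ge0.
move=> C' hC'.
have [mu [mud hmu]] := @near_opt _ _ _ M Pi h C' hC hC'.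
have C'0 : 0 <= C' by apply: le_trans (ltW hC').
have hBp : 0 < \sum_(t < T) \sum_(xa <- s) d t xa * g t xa -> 0 < B.
  move=> Lp; rewrite lt0r B0 andbT; apply/eqP => B00; move: Lp.
  rewrite big1 ?ltxx // => t _; rewrite big1 // => xa _.
  have /andP[g0 gB] := hg t xa (ltn_ord t); rewrite B00 in gB.
  have -> : g t xa = 0 by apply/le_anti/andP.
  by rewrite mulr0.
apply: cube => //.
- by rewrite addr_ge0 // sqr_ge0.
- move=> Lp; rewrite ltr0n lt0n; apply/negP => /eqP T0.
  by move: Lp; clear -T0; subst T; rewrite big_ord0 ltxx.
- move=> /hBp Bp; apply: (@lt_le_trans _ _ (B ^+ 2)); first by rewrite exprn_gt0.
  by rewrite lerDr sqr_ge0.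
move=> kap eta kp ep.
apply: (@core_bound R _ s T d g mu B beta C') => //.
- exact: (proj1 mud).
- rewrite -lee_fin -sumEFin.
  apply: (le_trans (@sum_le_esum R _ F _ finF _)); last by rewrite (proj2 mud).
  by move=> x; rewrite lee_fin (proj1 mud).
- move=> t tT; rewrite -lee_fin -sumEFin.
  rewrite (eq_bigr (fun x => occ M (pi t) h x)); last by move=> x _; rewrite occE'.
  apply: (le_trans (@sum_le_esum R _ F _ finF _)); last exact: (@occ_mass _ _ _ M (pi t) (Hp t tT) h h0).
  by move=> x; exact: (@occ_ge0 _ _ _ M (pi t) (Hp t tT)).
- move=> t x tT mu0x; apply/eqP; rewrite eq_le d0 // andbT leNgt; apply/negP => dpos.
  have : (occ M (pi t) h x * ratio_term (occ M (pi t) h x) (mu x) <= cov_obj M (pi t) h mu)%E.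
    apply: esum_ge; exists [set x]; first by split => //; exact: finite_set1.
    by rewrite fsbig_set1.
  rewrite /ratio_term mu0x ltxx occE' // mulry gtr0_sg // mul1e => /le_trans.
  move=> /(_ _ (hmu _ (hpi t tT))).
  by rewrite leNgt ltry.
- move=> t tT; rewrite -lee_fin -sumEFin.
  apply: (@le_trans _ _ (\sum_(x <- s) (occ M (pi t) h x * ratio_term (occ M (pi t) h x) (mu x)))%E).
    apply: lee_sum => x _; case: (ltP 0 (mu x)) => mup.
      by rewrite /ratio_term mup occE' // -EFinM lee_fin expr2 -mulrA.
    have mu0x : mu x = 0 by apply/le_anti; rewrite mup (proj1 mud).
    rewrite mu0x invr0 mulr0; apply: mule_ge0.
      exact: (@occ_ge0 _ _ _ M (pi t) (Hp t tT)).
    by apply: ratio_ge0; exact: (@occ_ge0 _ _ _ M (pi t) (Hp t tT)).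
  apply: (le_trans (@sum_le_esum R _ F _ finF _)); last exact: hmu (hpi t tT).
  move=> x; apply: mule_ge0; first exact: (@occ_ge0 _ _ _ M (pi t) (Hp t tT)).
  by apply: ratio_ge0; exact: (@occ_ge0 _ _ _ M (pi t) (Hp t tT)).
- move=> t tT; rewrite -lee_fin; apply: le_trans (hsq t tT).
  rewrite -sumEFin; apply: lee_sum => i _.
  have iT : (i < T)%N := ltn_trans (ltn_ord i) tT.
  rewrite -sumEFin.
  rewrite (eq_bigr (fun x => occ M (pi i) h x * (g t x ^+ 2)%:E)%E); last first.
    by move=> x _; rewrite EFinM -occE'.
  apply: (@sum_le_esum R _ F _ finF _) => x.
  apply: mule_ge0; first exact: (@occ_ge0 _ _ _ M (pi i) (Hp i iT)).
  by rewrite lee_fin sqr_ge0.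
Qed.
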